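(* Let $k\ge2$ be an integer, let $g$ be the function (defined in the context) associated with a feasible solution $\bar\pi$, with $\bar\pi_1\ge\dots\ge\bar\pi_p$, of the dual fractional bin packing LP of some 1D bin packing instance with distinct sizes $s_1>\dots>s_p$ in $(0,1]$. For any finite list $L$ of boxes in $[0,1]^3$, writing $W(L)=\sum_{R\in L} f_k(l(R))\,g(w(R))\,h(R)$, we have $W(L)\le T_k\cdot OPT(L)$.
   Context: 3D strip packing: boxes $R=(l(R),w(R),h(R))$ (length, width, height), all sides at most 1, packed orthogonally without rotation or overlap into a strip of length 1, width 1 and unlimited height; $OPT(L)$ is the minimum height needed. Weighting function: $f_k(x)=\frac1t$ if $\frac1{t+1}<x\le\frac1t$ with $1\le t<k$, $f_k(x)=\frac{kx}{k-1}$ if $0<x\le\frac1k$, and $f_k(0)=0$. Let $t_1=1$, $t_{i+1}=t_i(t_i+1)$, $m(k)$ the integer with $t_{m(k)}<k\le t_{m(k)+1}$, and $T_k=\sum_{i=1}^{m(k)}\frac1{t_i}+\frac1{t_{m(k)+1}}\cdot\frac{k}{k-1}$. Dual fractional bin packing LP: for sizes $s_1>\dots>s_p$ with multiplicities $n_j$, a feasible pattern is a nonnegative integer vector $v$ with $\sum_j v_js_j\le1$; the dual is: maximize $\sum_jn_j\pi_j$ s.t. $\sum_jv_j\pi_j\le1$ for all feasible patterns $v$, $\pi\ge0$. Given such a feasible $\bar\pi$ with $\bar\pi_1\ge\dots\ge\bar\pi_p$, set $\bar\pi_{p+1}=0$, $s_0=1$, $s_{p+1}=0$ and $g(0)=0$,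 $g(x)=\bar\pi_j$ for $x\in[s_j,s_{j-1})$, and $g(1)=\bar\pi_1$. *)

(* Defs.v *)
From mathcomp Require Import all_boot all_order all_algebra.
From mathcomp Require Import all_classical all_reals.
Set Implicit Arguments. Unset Strict Implicit. Unset Printing Implicit Defensive.
Import Order.TTheory GRing.Theory Num.Theory.
Local Open Scope ring_scope.
Local Open Scope classical_set_scope.

Section Defs.
Variable R : realType.

Definition box := (R * R * R)%type.
Definition bl (b : box) : R := b.1.1.
Definition bw (b : box) : R := b.1.2.
Definition bh (b : box) : R := b.2.

Definition box_in_unit_cube (b : box) : Prop :=
  [/\ 0 <= bl b <= 1, 0 <= bw b <= 1 & 0 <= bh b <= 1].

(* A packing of L into the strip [0,1] x [0,1] x [0,H]: position (x,y,z) of the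
   lower corner of each box (indexed by its position in the list), no
   rotation, boxes inside the strip, interiors pairwise disjoint. *)
Definition packs_in_height (L : seq box) (H : R) : Prop :=
  exists pos : nat -> R * R * R,
    (forall i, (i < size L)%N ->
       let b := nth (0, 0, 0) L i in let q := pos i in
       [/\ (0 <= q.1.1) && (q.1.1 + bl b <= 1),
           (0 <= q.1.2) && (q.1.2 + bw b <= 1) &
           (0 <= q.2) && (q.2 + bh b <= H)]) /\
    (forall i j, (i < size L)%N -> (j < size L)%N -> i != j ->
       let bi := nth (0, 0, 0) L i in let bj := nth (0, 0, 0) L j in
       let qi := pos i in let qj := pos j in
       [|| qi.1.1 + bl bi <= qj.1.1, qj.1.1 + bl bj <= qi.1.1,
           qi.1.2 + bw bi <= qj.1.2, qj.1.2 + bw bj <= qi.1.2,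
           qi.2 + bh bi <= qj.2 | qj.2 + bh bj <= qi.2]).

Definition OPT (L : seq box) : R := inf [set H | packs_in_height L H].

Definition fk (k : nat) (x : R) : R :=
  if x == 0 then 0
  else if (0 < x) && (x <= (k%:R)^-1) then k%:R * x / (k%:R - 1)
  else match [pick t : 'I_k | (0 < (t : nat))%N &&
                   (((t.+1)%:R : R)^-1 < x) && (x <= ((t : nat)%:R : R)^-1)] with
       | Some t => (((t : nat)%:R : R))^-1
       | None => 0
       end.

(* t_1 = 1, t_{i+1} = t_i (t_i + 1); t i is t_i for i >= 1. *)
Fixpoint sylv (n : nat) : nat :=
  match n with 0 => 1 | n'.+1 => sylv n' * (sylv n' + 1) end.
Definition tseq (i : nat) : nat := sylv i.-1.

(* T_k, where m = m(k) is the integer with t_m < k <= t_{m+1}. *)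
Definition Tk (k m : nat) : R :=
  \sum_(1 <= i < m.+1) ((tseq i)%:R)^-1
  + ((tseq m.+1)%:R)^-1 * (k%:R / (k%:R - 1)).

(* Sizes s_1 > ... > s_p and dual values pi_1..pi_p are given as functions
   nat -> R, only indices 1..p being relevant. *)
Definition dual_feasible (p : nat) (s pi : nat -> R) : Prop :=
  (forall j, (1 <= j <= p)%N -> 0 <= pi j) /\
  (forall v : nat -> nat,
     \sum_(1 <= j < p.+1) (v j)%:R * s j <= 1 ->
     \sum_(1 <= j < p.+1) (v j)%:R * pi j <= 1).

Definition sext (p : nat) (s : nat -> R) (j : nat) : R :=
  if j == 0%N then 1 else if (j <= p)%N then s j else 0.
Definition piext (p : nat) (pi : nat -> R) (j : nat) : R :=
  if (1 <= j <= p)%N then pi j else 0.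

Definition gfun (p : nat) (s pi : nat -> R) (x : R) : R :=
  if x == 0 then 0
  else if x == 1 then pi 1%N
  else match [pick j : 'I_p.+2 | (0 < (j : nat))%N &&
                (sext p s j <= x) && (x < sext p s (j : nat).-1)] with
       | Some j => piext p pi j
       | None => 0
       end.

Definition Wgt (k : nat) (g : R -> R) (L : seq box) : R :=
  \sum_(b <- L) fk k (bl b) * g (bw b) * bh b.

End Defs.

(* Main.v *)
Require Import Defs.
From mathcomp Require Import all_boot all_order all_algebra.
From mathcomp Require Import all_classical all_reals.
From mathcomp Require Import ring lra zify.
Import Order.TTheory GRing.Theory Num.Theory.
Local Open Scope ring_scope.

Section S.
Variable R : realType.

Lemma tele (zs : seq R) (a b : R) : sorted <%R zs -> a \in zs -> b \in zs -> a <= b ->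
  \sum_(t < (size zs).-1) (zs`_t.+1 - zs`_t) * ((a <= zs`_t) && (zs`_t.+1 <= b))%:R = b - a.
Proof.
move=> szs ain bin ab.
have mono := lt_sorted_leq_nth 0 szs.
have ua : (index a zs < size zs)%N by rewrite index_mem.
have ub : (index b zs < size zs)%N by rewrite index_mem.
rewrite -(nth_index 0 ain) -(nth_index 0 bin).
rewrite -(nth_index 0 ain) -(nth_index 0 bin) in ab.
move: (index a zs) (index b zs) ua ub ab => u v ua ub ab.
move: mono; move: (size zs) ua ub => N ua ub mono.
have uv : (u <= v)%N by rewrite -(mono u v) ?inE.
have vN : (v <= N.-1)%N by lia.
rewrite -(big_mkord xpredT (fun t => (zs`_t.+1 - zs`_t) * ((zs`_u <= zs`_t) && (zs`_t.+1 <= zs`_v))%:R)).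
rewrite (@big_cat_nat _ _ _ u) ?(leq_trans uv vN) //=.
rewrite (@big_cat_nat _ _ _ v u) //=.
rewrite big1_seq; last first.
  move=> t /andP[_]; rewrite mem_index_iota => /andP[_ tu].
  rewrite mono ?inE; try lia. by rewrite leqNgt tu mulr0.
rewrite [\sum_(v <= i < N.-1) _]big1_seq; last first.
  move=> t /andP[_]; rewrite mem_index_iota => /andP[vt tN].
  rewrite (mono t.+1 v) ?inE; try lia. by rewrite (leqNgt t.+1) ltnS vt andbF mulr0.
rewrite add0r addr0 -telescope_sumr //.
apply: eq_big_nat => t /andP[ut tv].
rewrite !mono ?inE; try lia. by rewrite ut tv mulr1.
Qed.


Lemma ord_pred_lt n (t : 'I_n.-1) : (t.+1 < n)%N /\ (t < n)%N.
Proof. case: n t => [[] //|n] [t ht] //=; split; lia. Qed.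

Lemma slice (I : finType) (P : pred I) (F p c : I -> R) (B M : R) :
  0 <= B -> 0 <= M ->
  (forall i, P i -> [/\ 0 <= F i, 0 <= c i, 0 <= p i & p i + c i <= B]) ->
  (forall z, \sum_(i | P i && (p i < z < p i + c i)) F i <= M) ->
  \sum_(i | P i) F i * c i <= M * B.
Proof.
move=> B0 M0 hyp hz.
pose zs := sort <=%R (undup (0 :: B :: [seq p i | i <- enum P] ++ [seq p i + c i | i <- enum P])).
have szs : sorted <%R zs by rewrite sort_lt_sorted undup_uniq.
have memz x : (x \in zs) = (x \in 0 :: B :: [seq p i | i <- enum P] ++ [seq p i + c i | i <- enum P]).
  by rewrite mem_sort mem_undup.
have rng x : x \in zs -> 0 <= x <= B.
  rewrite memz !inE mem_cat => /orP[/eqP->|/orP[/eqP->|/orP[]]]; rewrite ?lexx ?B0 //.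
    by case/mapP => i; rewrite mem_enum => /hyp[_ c0 p0 pcB] ->; rewrite p0 (le_trans _ pcB) // lerDl.
  by case/mapP => i; rewrite mem_enum => /hyp[_ c0 p0 pcB] ->; rewrite pcB addr_ge0.
have pin i : P i -> p i \in zs.
  by move=> Pi; rewrite memz !inE mem_cat map_f ?orbT // mem_enum.
have pcin i : P i -> p i + c i \in zs.
  by move=> Pi; rewrite memz !inE mem_cat (map_f (fun i => p i + c i)) ?orbT // mem_enum.
have ce i : P i -> c i = \sum_(t < (size zs).-1) (zs`_t.+1 - zs`_t) * ((p i <= zs`_t) && (zs`_t.+1 <= p i + c i))%:R.
  move=> Pi; have [_ c0 _ _] := hyp i Pi.
  rewrite tele ?pin ?pcin //; [lra | by rewrite lerDl].
have -> : \sum_(i | P i) F i * c i = \sum_(i | P i) \sum_(t < (size zs).-1) F i * ((zs`_t.+1 - zs`_t) * ((p i <= zs`_t) && (zs`_t.+1 <= p i + c i))%:R).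
  by apply: eq_bigr => i Pi; rewrite {1}(ce i Pi) mulr_sumr.
rewrite exchange_big /=.
have Btot : B = \sum_(t < (size zs).-1) (zs`_t.+1 - zs`_t).
  have B0in : (0:R) \in zs by rewrite memz inE eqxx.
  have Bin : B \in zs by rewrite memz !inE eqxx orbT.
  rewrite -[B]subr0 -(@tele zs 0 B szs B0in Bin B0); apply: eq_bigr => t _.
  have [tN tN'] := @ord_pred_lt (size zs) t.
  have /andP[-> _] := rng _ (mem_nth 0 tN').
  have /andP[_ ->] := rng _ (mem_nth 0 tN).
  by rewrite mulr1.
rewrite Btot mulr_sumr; apply: ler_sum => t _.
have [tN tN'] := @ord_pred_lt (size zs) t.
have dlt : zs`_t < zs`_t.+1 by rewrite (lt_sorted_ltn_nth 0 szs) ?inE.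
pose z := (zs`_t + zs`_t.+1) / 2.
apply: (@le_trans _ _ ((zs`_t.+1 - zs`_t) * \sum_(i | P i && (p i < z < p i + c i)) F i)); last first.
  by rewrite mulrC ler_wpM2r // ?hz // subr_ge0 ltW.
rewrite mulr_sumr big_mkcondr /=; apply: ler_sum => i Pi.
have [F0 _ _ _] := hyp i Pi.
case: ifP => hq.
  by rewrite mulrCA ler_pM2l ?subr_gt0 //; case: (_ && _); rewrite /= ?mulr1 ?mulr0 ?lexx.
case hc: ((p i <= zs`_t) && (zs`_t.+1 <= p i + c i)); last by rewrite mulr0 mulr0.
exfalso; move: hc hq => /andP[h1 h2] /negbT/negP; apply.
by apply/andP; split; rewrite /z; lra.
Qed.


Lemma sum_le1 (I : finType) (Q : pred I) :
  (forall i j, Q i -> Q j -> i = j) -> \sum_(i | Q i) (1:R) <= 1.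
Proof.
move=> h; case: (pickP Q) => [i Qi|Q0]; last by rewrite big_pred0.
rewrite (bigD1 i) //= big_pred0 ?addr0 // => j.
by apply/negbTE/negP => /andP[Qj /eqP]; apply; apply: h.
Qed.

Lemma volume (L : seq (box R)) (H : R) :
  packs_in_height L H ->
  (forall b, b \in L -> [/\ 0 <= bl b, 0 <= bw b & 0 <= bh b]) -> 0 <= H ->
  \sum_(b <- L) bl b * bw b * bh b <= H.
Proof.
case=> pos [hin hsep] hnn H0.
rewrite (big_nth (0,0,0)) big_mkord.
set N := size L in hin hsep *.
pose nb (i : 'I_N) := nth (0,0,0) L i.
have hnb (i : 'I_N) : [/\ 0 <= bl (nb i), 0 <= bw (nb i) & 0 <= bh (nb i)].
  by apply: hnn; rewrite mem_nth.
have hi (i : 'I_N) := hin i (ltn_ord i).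
have hs (i j : 'I_N) : i != j -> _ := hsep i j (ltn_ord i) (ltn_ord j).
rewrite -[H]mul1r.
apply: (@slice _ predT (fun i => bl (nb i) * bw (nb i)) (fun i : 'I_N => (pos i).2)) => //.
  move=> i _; have [l0 w0 h0] := hnb i; have /= [_ _ /andP[z0 zH]] := hi i.
  by split => //; rewrite mulr_ge0.
move=> z; rewrite -[1]mulr1.
apply: (@slice _ _ (fun i => bl (nb i)) (fun i : 'I_N => (pos i).1.2)) => //.
  move=> i _; have [l0 w0 h0] := hnb i; have /= [_ /andP[y0 y1] _] := hi i.
  by split.
move=> y; rewrite -[1]mulr1.
under eq_bigr do rewrite -[bl _]mul1r.
apply: (@slice _ _ (fun i => 1) (fun i : 'I_N => (pos i).1.1)) => //.
  move=> i _; have [l0 w0 h0] := hnb i; have /= [/andP[x0 x1] _ _] := hi i.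
  by split.
move=> x; apply: sum_le1 => i j /andP[/andP[/andP[_ /andP[zi1 zi2]] /andP[yi1 yi2]] /andP[xi1 xi2]].
move=> /andP[/andP[/andP[_ /andP[zj1 zj2]] /andP[yj1 yj2]] /andP[xj1 xj2]].
apply/eqP; apply/negPn/negP => ij.
have := hs i j ij; rewrite /=.
by case/orP=> [|/orP[|/orP[|/orP[|/orP[]]]]] h; lra.
Qed.


Lemma sep_contra (a b c d z : R) : a < z -> z < a + c -> b < z -> z < b + d ->
  (a + c <= b) || (b + d <= a) -> False.
Proof. by move=> ? ? ? ? /orP[] ?; lra. Qed.

Definition DFF (u : R -> R) := forall (I : finType) (S : pred I) (x : I -> R),
  (forall i, S i -> 0 <= x i) -> \sum_(i | S i) x i <= 1 -> \sum_(i | S i) u (x i) <= 1.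

Lemma transform (u : R -> R) (L : seq (box R)) (H : R) :
  packs_in_height L H -> (forall b, b \in L -> 0 <= bl b) -> u 0 = 0 -> DFF u ->
  packs_in_height [seq (u (bl b), bw b, bh b) | b <- L] H.
Proof.
case=> pos [hin hsep] hnn u0 hu.
set N := size L in hin hsep.
pose lx (j : nat) := bl (nth (0,0,0) L j).
pose X (j : nat) := (pos j).1.1.
have lx0 (j : nat) : (j < N)%N -> 0 <= lx j by move=> jN; apply: hnn; rewrite mem_nth.
have hX (j : nat) : (j < N)%N -> 0 <= X j /\ X j + lx j <= 1.
  by move=> jN; have /= [/andP[] ] := hin j jN.
pose pw (S : {set 'I_N}) := [forall s in S, forall t in S,
   [|| s == t, X s + lx s <= X t | X t + lx t <= X s]].
pose bef (S : {set 'I_N}) (i : nat) := [forall s in S, X s + lx s <= X i].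
pose nX (i : nat) := \big[Order.max/0]_(S : {set 'I_N} | pw S && bef S i) \sum_(s in S) u (lx s).
have F1 S : pw S -> \sum_(s in S) lx s <= 1.
  move=> /forall_inP hpw.
  rewrite -[1]mulr1.
  under eq_bigr do rewrite -[lx _]mul1r.
  apply: (@slice _ _ (fun _ => 1) (fun s : 'I_N => X s)) => //.
    by move=> s _; have [] := hX s (ltn_ord s); split => //; apply: lx0.
  move=> z; apply: sum_le1 => s t /andP[sS /andP[h1 h2]] /andP[tS /andP[h3 h4]].
  have /forall_inP/(_ t tS) := hpw s sS.
  case/orP => [/eqP -> //|/orP[] h]; exfalso; lra.
have F2 S : pw S -> \sum_(s in S) u (lx s) <= 1.
  move=> /F1 h; apply: hu h => s _; exact: lx0.
have pwU S (i : 'I_N) : pw S -> bef S i -> pw (i |: S).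
  move=> /forall_inP hpw /forall_inP hb; apply/forall_inP => s; rewrite in_setU1.
  case/orP => [/eqP->|sS]; apply/forall_inP => t; rewrite in_setU1.
    case/orP => [/eqP->|tS]; first by rewrite eqxx.
    by rewrite (hb t tS) !orbT.
  case/orP => [/eqP->|tS]; first by rewrite (hb s sS) orbT.
  by have /forall_inP := hpw s sS; apply.
have addi S (i : 'I_N) : bef S i -> \sum_(s in S) u (lx s) + u (lx i) <= \sum_(s in i |: S) u (lx s).
  move=> /forall_inP hb; case: (boolP (i \in S)) => iS.
    have := hb i iS; have := lx0 i (ltn_ord i) => l0 h.
    have -> : lx i = 0 by lra.
    have -> : i |: S = S by apply/setP => x; rewrite in_setU1; case: eqP => // ->.
    by rewrite u0 addr0.
  by rewrite big_setU1 //= addrC.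
have uub (i : nat) : (i < N)%N -> u (lx i) <= 1.
  move=> iN; pose i' := Ordinal iN.
  have := hu _ (pred1 i') (fun s : 'I_N => lx s).
  rewrite !big_pred1_eq /=; apply.
    by move=> s /eqP ->; apply: lx0.
  by have [] := hX i iN; have := lx0 i iN; lra.
have nX0 i : 0 <= nX i by apply: bigmax_ge_id.
have nXub (i : nat) : (i < N)%N -> nX i + u (lx i) <= 1.
  move=> iN; pose i' := Ordinal iN.
  rewrite -lerBrDr; apply: bigmax_le; first by rewrite subr_ge0 uub.
  move=> S /andP[hpw hb]; rewrite lerBrDr.
  apply: le_trans (addi S i' hb) _.
  by apply: F2; apply: pwU.
have nXsep (i j : nat) : (i < N)%N -> X i + lx i <= X j -> nX i + u (lx i) <= nX j.
  move=> iN hij; pose i' := Ordinal iN.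
  have befU S : bef S i -> bef (i' |: S) j.
    move=> /forall_inP hb; apply/forall_inP => s; rewrite in_setU1.
    case/orP => [/eqP -> //|sS]; have := hb s sS; have := lx0 i iN.
    by move: (X s) (lx s) (X i) (lx i) (X j) hij => a b c d e; lra.
  have pw0 : pw finset.set0 by apply/forall_inP => s; rewrite inE.
  have bef0 : bef finset.set0 i by apply/forall_inP => s; rewrite inE.
  rewrite -lerBrDr; apply: bigmax_le.
    rewrite subr_ge0; have h1 := addi finset.set0 i' bef0.
    rewrite big_set0 add0r in h1; apply: le_trans h1 _.
    by apply: le_bigmax_cond; rewrite pwU ?befU.
  move=> S /andP[hpw hb]; rewrite lerBrDr.
  apply: le_trans (addi S i' hb) _.
  by apply: le_bigmax_cond; rewrite pwU ?befU.
exists (fun j => (nX j, (pos j).1.2, (pos j).2)); split.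
  move=> j; rewrite size_map => jN /=.
  rewrite (nth_map (0,0,0)) //=.
  have /= [_ -> ->] := hin j jN; split => //.
  by rewrite nX0 (nXub j jN).
move=> i j; rewrite size_map => iN jN ij /=.
rewrite !(nth_map (0,0,0)) //=.
have /= := hsep i j iN jN ij.
case/orP => [h|/orP[h|]].
- by rewrite (nXsep i j iN h).
- by rewrite (nXsep j i jN h) orbT.
- by move=> h; rewrite h !orbT.
Qed.

End S.
Section S2.
Variable R : realType.

Lemma invn_le (a b : nat) : (0 < a)%N -> (a <= b)%N -> (b%:R : R)^-1 <= (a%:R)^-1.
Proof.
move=> a0 ab; rewrite lef_pV2 ?ler_nat // posrE ltr0n //; lia.
Qed.

Lemma invn_lt (a b : nat) : (0 < a)%N -> (0 < b)%N -> ((b%:R : R)^-1 < (a%:R)^-1) = (a < b)%N.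
Proof.
by move=> a0 b0; rewrite ltf_pV2 ?ltr_nat // posrE ltr0n.
Qed.

Variable k : nat.
Hypothesis k2 : (2 <= k)%N.

Lemma km1_gt0 : 0 < (k%:R : R) - 1.
Proof. have : (2%:R : R) <= k%:R by rewrite ler_nat. lra. Qed.

Lemma fk_ge0 (x : R) : 0 <= fk k x.
Proof.
have := km1_gt0 => hk.
rewrite /fk; case: eqP => // x0; case: ifP => [/andP[xp _]|_].
  by rewrite divr_ge0 ?mulr_ge0 // ?ltW.
by case: pickP => // t _; rewrite invr_ge0.
Qed.

Lemma fk_small_le (x : R) : 0 <= x <= (k%:R)^-1 -> fk k x <= k%:R * x / (k%:R - 1).
Proof.
have := km1_gt0 => hk /andP[x0 xk].
rewrite /fk; case: eqP => [->|xn0]; first by rewrite mulr0 mul0r.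
case: ifP => // _; case: pickP => [t /andP[/andP[t0 h1] h2]|_]; last first.
  by rewrite divr_ge0 ?mulr_ge0 // ?ltW.
exfalso.
have : (k%:R : R)^-1 <= (t.+1%:R)^-1 by apply: invn_le => //; apply: ltn_ord.
move=> HH; have := lt_le_trans h1 (le_trans xk HH); by rewrite ltxx.
Qed.

Lemma fk_mid_le (a : nat) (x : R) : (1 <= a)%N -> (a < k)%N ->
  (a.+1%:R)^-1 < x -> x <= (a%:R)^-1 -> fk k x <= (a%:R)^-1.
Proof.
move=> a1 ak h1 h2.
have hak : (k%:R : R)^-1 <= (a.+1%:R)^-1 by apply: invn_le.
rewrite /fk; case: eqP => [_|xn0]; first by rewrite invr_ge0.
case: ifP => [/andP[_ xk]|_]; first by have := lt_le_trans h1 (le_trans xk hak); rewrite ltxx.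
case: pickP => [t /andP[/andP[t0 h3] h4]|_]; last by rewrite invr_ge0.
apply: invn_le => //.
have : (t.+1%:R : R)^-1 < (a%:R)^-1 by apply: lt_le_trans h3 h2.
by rewrite invn_lt //; lia.
Qed.

Lemma fk_dens (a : nat) (D x : R) :
  (1 + (a.+1%:R)^-1 <= D) -> (k%:R / (k%:R - 1) <= D) ->
  0 <= x -> x <= (a.+1%:R)^-1 -> fk k x <= D * x.
Proof.
move=> hD1 hD2 x0 xa.
have hk := km1_gt0.
have D0 : 0 <= D by apply: le_trans hD2; rewrite divr_ge0 // ?ler0n // ltW.
rewrite /fk; case: eqP => [->|xn0]; first by rewrite mulr0.
case: ifP => [/andP[_ xk]|_].
  by rewrite mulrAC ler_wpM2r.
case: pickP => [t /andP[/andP[t0 h3] h4]|_]; last by rewrite mulr_ge0.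
have tp : (0 : R) < t%:R by rewrite ltr0n.
have tp1 : (0 : R) < t.+1%:R by rewrite ltr0n.
have e : (t%:R : R)^-1 = (1 + (t%:R)^-1) * (t.+1%:R)^-1.
  rewrite -natr1; field; apply/andP; split; rewrite ?natr1 lt0r_neq0 //.
rewrite e; apply: le_trans (_ : (1 + (t%:R)^-1) * x <= _).
  by rewrite ler_wpM2l ?ltW // addr_gt0 // invr_gt0.
apply: ler_wpM2r => //; apply: le_trans hD1; rewrite lerD2l.
apply: invn_le => //.
have : (t.+1%:R : R)^-1 < (a.+1%:R)^-1 by apply: lt_le_trans h3 xa.
by rewrite invn_lt //; lia.
Qed.


Lemma rH1 (A T : R) : 1 <= A -> ((A * (A + 1))^-1 <= T) -> (A + 1)^-1 <= A * T.
Proof.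
move=> A1 hT.
have -> : (A + 1)^-1 = A * (A * (A + 1))^-1.
  by field; apply/andP; split; apply: lt0r_neq0; lra.
by rewrite ler_wpM2l //; lra.
Qed.

Lemma rH2 (A K : R) : 1 <= A -> A + 1 <= K -> (K - 1)^-1 <= A * ((A * (A + 1))^-1 * (K / (K - 1))).
Proof.
move=> A1 AK; rewrite -subr_ge0.
have -> : A * ((A * (A + 1))^-1 * (K / (K - 1))) - (K - 1)^-1 = (K - (A + 1)) / ((A + 1) * (K - 1)).
  by field; rewrite !lt0r_neq0 //; lra.
by rewrite divr_ge0 ?mulr_ge0 //; lra.
Qed.

Lemma rH3 (A K : R) : 1 <= A -> A + 1 <= K - 1 -> (K - 1)^-1 <= (A + 1)^-1.
Proof.
move=> A1 AK; rewrite lef_pV2 // posrE; lra.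
Qed.

Lemma sylv_pos n : (0 < sylv n)%N.
Proof. by elim: n => //= n IH; rewrite muln_gt0 IH addn1. Qed.

Lemma sylv_mono a b : (a <= b)%N -> (sylv a <= sylv b)%N.
Proof.
move=> ab; rewrite -(subnK ab); elim: (b - a)%N => // d IH.
rewrite addSn /=; apply: leq_trans IH _; rewrite leq_pmulr // addn1 //.
Qed.

Variable m : nat.
Hypothesis m1 : (1 <= m)%N.
Hypothesis hkm : (tseq m < k <= tseq m.+1)%N.

Definition Tj (j : nat) : R := \sum_(j <= i < m.+1) ((tseq i)%:R)^-1
  + ((tseq m.+1)%:R)^-1 * (k%:R / (k%:R - 1)).

Lemma tseq_pos j : (0 < tseq j)%N.
Proof. exact: sylv_pos. Qed.

Lemma tseq_succ j : (1 <= j)%N -> tseq j.+1 = (tseq j * (tseq j + 1))%N.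
Proof. by case: j. Qed.

Lemma tseq_mono i j : (i <= j)%N -> (tseq i <= tseq j)%N.
Proof. move=> ij; apply: sylv_mono; lia. Qed.

Lemma kk_ge1 : 1 <= (k%:R : R) / (k%:R - 1).
Proof.
have hk := km1_gt0; rewrite ler_pdivlMr // mul1r; lra.
Qed.

Lemma Tj_ge0 j : 0 <= Tj j.
Proof.
have hk := km1_gt0.
rewrite /Tj addr_ge0 ?sumr_ge0 // => [i _|]; first by rewrite invr_ge0.
by rewrite mulr_ge0 ?invr_ge0 ?divr_ge0 // ltW.
Qed.

Lemma Tj_step j : (j <= m)%N -> Tj j = ((tseq j)%:R)^-1 + Tj j.+1.
Proof. by move=> jm; rewrite /Tj big_ltn ?ltnS // addrA. Qed.

Lemma Tj_last : Tj m.+1 = ((tseq m.+1)%:R)^-1 * (k%:R / (k%:R - 1)).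
Proof. by rewrite /Tj big_geq // add0r. Qed.

Lemma Tj_ge j : (j <= m.+1)%N -> ((tseq j)%:R)^-1 <= Tj j.
Proof.
move=> jm; case: (ltnP j m.+1) => hj.
  by rewrite Tj_step // lerDl Tj_ge0.
have -> : j = m.+1 by lia.
rewrite Tj_last ler_pMr ?kk_ge1 // invr_gt0 ltr0n tseq_pos //.
Qed.


Lemma le_sum_one {I : finType} {S : pred I} {x : I -> R} {i : I} :
  (forall i, S i -> 0 <= x i) -> S i -> x i <= \sum_(l | S l) x l.
Proof.
move=> x0 Si; rewrite (bigD1 i Si) /= lerDl sumr_ge0 // => l /andP[] *; exact: x0.
Qed.

Lemma LL n : forall j, (m.+1 - j)%N = n -> (1 <= j <= m.+1)%N ->
  forall (I : finType) (S : pred I) (x : I -> R), (forall i, S i -> 0 <= x i) ->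
  \sum_(i | S i) x i <= ((tseq j)%:R)^-1 -> \sum_(i | S i) fk k (x i) <= Tj j.
Proof.
have hk := km1_gt0.
elim: n => [|n IH] j hn hj I S x x0 hs.
  have jm1 : j = m.+1 by lia.
  subst j.
  apply: (@le_trans _ _ (\sum_(i | S i) k%:R * x i / (k%:R - 1))).
    apply: ler_sum => i Si; apply: fk_small_le; rewrite x0 //=.
    apply: le_trans (le_sum_one x0 Si) _; apply: le_trans hs _.
    by apply: invn_le; lia.
  rewrite Tj_last.
  under eq_bigr do rewrite mulrAC.
  rewrite -mulr_sumr mulrC; apply: ler_wpM2r => //.
  by rewrite divr_ge0 ?ler0n // ltW.
have jm : (j <= m)%N by lia.
set a := tseq j.
have a1 : (1 <= a)%N by apply: tseq_pos.
have ak : (a < k)%N by have := @tseq_mono j m jm; lia.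
have tj1 : tseq j.+1 = (a * (a + 1))%N by rewrite tseq_succ //; lia.
have Ap : (1 : R) <= a%:R by rewrite ler1n.
case: (pickP (fun i => S i && ((a.+1%:R : R)^-1 < x i))) => [i /andP[Si hi] | hnone].
  rewrite (bigD1 i Si) /= Tj_step //; apply: lerD.
    apply: fk_mid_le => //; apply: le_trans (le_sum_one x0 Si) hs.
  apply: (IH j.+1); try lia.
    by move=> l /andP[Sl _]; apply: x0.
  have e : \sum_(l | S l && (l != i)) x l = \sum_(l | S l) x l - x i.
    rewrite (bigD1 i Si) /=; ring.
  rewrite e tj1 natrM; apply: le_trans (_ : (a%:R)^-1 - (a.+1%:R)^-1 <= _).
    by rewrite lerB // ltW.
  rewrite -natr1 natrD; move: Ap; move: (a%:R : R) => A Ap.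
  have -> : A^-1 - (A + 1)^-1 = (A * (A + 1%:R))^-1 by field; rewrite !lt0r_neq0 //; lra.
  by [].
have hTj1 := Tj_ge j.+1 jm.
rewrite tj1 natrM natrD in hTj1.
pose D := a%:R * Tj j.
have eD : D = 1 + a%:R * Tj j.+1.
  rewrite /D Tj_step // mulrDr mulfV // lt0r_neq0 //; lra.
have hD1 : 1 + (a.+1%:R)^-1 <= D.
  by rewrite eD lerD2l -natr1; apply: rH1.
have hD2 : k%:R / (k%:R - 1) <= D.
  have -> : (k%:R : R) / (k%:R - 1) = 1 + (k%:R - 1)^-1 by field; apply: lt0r_neq0.
  rewrite eD lerD2l.
  case: (ltnP j m) => hjm.
    apply: le_trans _ (rH1 _ _ Ap hTj1).
    apply: rH3 => //.
    have : (tseq j.+1 <= tseq m)%N by apply: tseq_mono.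
    rewrite tj1 => h.
    have : ((a + 1)%:R : R) <= (k - 1)%:R by rewrite ler_nat; nia.
    by rewrite natrD natrB //; lia.
  have jme : j = m by lia.
  rewrite jme Tj_last -jme tj1 natrM natrD; apply: rH2 => //.
  by rewrite natr1 ler_nat.
have D0 : 0 <= D by rewrite mulr_ge0 ?ler0n ?Tj_ge0.
apply: (@le_trans _ _ (\sum_(i | S i) D * x i)).
  apply: ler_sum => i Si; apply: (fk_dens a D (x i) hD1 hD2); first by apply: x0.
  have := hnone i; rewrite Si /= => /negbT; rewrite -leNgt //.
rewrite -mulr_sumr; apply: le_trans (ler_wpM2l D0 hs) _.
by rewrite /D mulrAC mulfV ?mul1r // lt0r_neq0 //; lra.
Qed.

End S2.
Section S3.
Variable R : realType.

Definition swapb (b : box R) : box R := (bw b, bl b, bh b).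

Lemma swap_pack (L : seq (box R)) H : packs_in_height L H -> packs_in_height (map swapb L) H.
Proof.
case=> pos [hin hsep]; exists (fun j => ((pos j).1.2, (pos j).1.1, (pos j).2)); split.
  move=> j; rewrite size_map => jN; rewrite (nth_map (0,0,0)) //=.
  by have /= [-> -> ->] := hin j jN.
move=> i j; rewrite size_map => iN jN ij; rewrite !(nth_map (0,0,0)) //=.
have /= := hsep i j iN jN ij.
by case/orP=> [->|/orP[->|/orP[->|/orP[->|/orP[->|->]]]]]; rewrite ?orbT.
Qed.

Lemma stack_pack (L : seq (box R)) : (forall b, b \in L -> box_in_unit_cube b) ->
  packs_in_height L (\sum_(b <- L) bh b).
Proof.
move=> hL.
have h0 b : b \in L -> 0 <= bh b by move/hL => [_ _ /andP[]].
pose P j := \sum_(b <- take j L) bh b.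
have Pmono a b : (a <= b)%N -> P a <= P b.
  move=> ab; rewrite /P -(cat_take_drop a (take b L)) big_cat /= take_takel //.
  rewrite lerDl big_seq sumr_ge0 // => x /mem_drop/mem_take; exact: h0.
have Pstep j : (j < size L)%N -> P j.+1 = P j + bh (nth (0,0,0) L j).
  by move=> jL; rewrite /P (take_nth (0,0,0)) // big_rcons.
have Ptot : P (size L) = \sum_(b <- L) bh b by rewrite /P take_size.
have P0 j : 0 <= P j by rewrite /P big_seq sumr_ge0 // => x /mem_take; exact: h0.
exists (fun j => (0, 0, P j)); split.
  move=> j jL /=; have [/andP[_ l1] /andP[_ w1] _] := hL _ (mem_nth (0,0,0) jL).
  by rewrite lexx !add0r l1 w1 P0 -Pstep // -Ptot Pmono.
move=> i j iL jL ij /=.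
case: (ltngtP i j) => [lt|lt|eq]; last by rewrite eq eqxx in ij.
  by rewrite -(Pstep i) // Pmono //= !orbT.
by rewrite -(Pstep j) // Pmono //= !orbT.
Qed.


Lemma sum_ind (q c : nat) (a : nat -> R) :
  \sum_(1 <= j < q.+1) (c == j)%:R * a j = if (1 <= c <= q)%N then a c else 0.
Proof.
elim: q => [|q IH]; first by rewrite big_geq //; case: c => [|[]].
rewrite big_nat_recr //= IH.
case: (c =P q.+1) => [->|neq]; first by rewrite mul1r ltnn andbF add0r leqnn.
rewrite mul0r addr0; case: ifP => h1; case: ifP => h2 //; exfalso; lia.
Qed.

Variables (p : nat) (s pi : nat -> R).
Hypothesis p1 : (1 <= p)%N.
Hypothesis srng : forall j, (1 <= j <= p)%N -> 0 < s j <= 1.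
Hypothesis hdf : dual_feasible p s pi.

Definition cls (x : R) : nat :=
  if x == 0 then 0%N
  else if x == 1 then 1%N
  else match [pick j : 'I_p.+2 | (0 < (j : nat))%N &&
                (sext p s j <= x) && (x < sext p s (j : nat).-1)] with
       | Some j => if (j <= p)%N then (j : nat) else 0%N
       | None => 0%N
       end.

Lemma gcls x : gfun p s pi x = piext p pi (cls x).
Proof.
rewrite /gfun /cls; case: eqP => _; first by rewrite /piext.
case: eqP => _; first by rewrite /piext p1.
case: pickP => [j _|_]; last by rewrite /piext.
by case: ifP => // jp; rewrite /piext jp andbF.
Qed.

Lemma cls_prop x : (1 <= cls x <= p)%N -> s (cls x) <= x.
Proof.
rewrite /cls; case: eqP => // xn0; case: eqP => [->|xn1] h.
  by case/andP: (srng 1 h).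
move: h; case: pickP => [j /andP[/andP[j0 hj] _]|_] //.
case: ifP => // jp _; move: hj; rewrite /sext.
by rewrite jp; case: eqP => // jz; rewrite jz in j0.
Qed.

Lemma g_ge0 x : 0 <= gfun p s pi x.
Proof.
rewrite gcls /piext; case: ifP => // h; by case: hdf => h0 _; apply: h0.
Qed.

Lemma g0 : gfun p s pi 0 = 0.
Proof. by rewrite /gfun eqxx. Qed.

Lemma g_DFF : DFF R (gfun p s pi).
Proof.
move=> I S x x0 hx.
pose v j := (\sum_(i | S i) (cls (x i) == j))%N.
have key (a : nat -> R) : \sum_(1 <= j < p.+1) (v j)%:R * a j =
    \sum_(i | S i) (if (1 <= cls (x i) <= p)%N then a (cls (x i)) else 0).
  under eq_bigr do rewrite natr_sum mulr_suml.
  rewrite exchange_big /=; apply: eq_bigr => i _.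
  by rewrite sum_ind.
have h := hdf.2 v.
rewrite (key s) (key pi) in h.
under eq_bigr do rewrite gcls.
rewrite /piext; apply: h.
apply: le_trans hx; apply: ler_sum => i Si.
by case: ifP => h'; [apply: cls_prop | apply: x0].
Qed.

End S3.

Lemma packs_nil (R : realType) (H : R) : packs_in_height [::] H.
Proof. by exists (fun _ => (0,0,0)); split. Qed.

Theorem lemma7 (R : realType) (k m : nat) (p : nat) (s pi : nat -> R)
  (L : seq (box R)) :
  (2 <= k)%N ->
  (1 <= m)%N -> (tseq m < k <= tseq m.+1)%N ->
  (1 <= p)%N ->
  (forall j, (1 <= j < p)%N -> s j.+1 < s j) ->
  (forall j, (1 <= j <= p)%N -> 0 < s j <= 1) ->
  dual_feasible p s pi ->
  (forall j, (1 <= j < p)%N -> pi j.+1 <= pi j) ->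
  (forall b, b \in L -> box_in_unit_cube b) ->
  Wgt k (gfun p s pi) L <= Tk R k m * OPT L.
Proof.
move=> k2 m1 hkm p1 sdec srng hdf pidec hL.
have Tpos : 0 < Tk R k m.
  apply: lt_le_trans (Tj_ge R k k2 m m1 hkm 1%N _) => //.
  by rewrite invr_gt0 ltr0n; apply: tseq_pos.
case: (L =P [::]) => [->|Lne].
  rewrite /Wgt big_nil /OPT inf_out ?mulr0 // => -[_ [lb hlb]].
  have := hlb (lb - 1) (packs_nil _ _); lra.
set T := Tk R k m in Tpos *.
pose uf (x : R) := fk k x / T.
have uf_DFF : DFF R uf.
  move=> I S x x0 hx; rewrite /uf -mulr_suml ler_pdivrMr // mul1r.
  apply: (LL R k k2 m m1 hkm m 1%N) => //; first lia.
  by rewrite /tseq /= invr1.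
have uf0 : uf 0 = 0 by rewrite /uf /fk eqxx mul0r.
have uf_ge0 x : 0 <= uf x by rewrite /uf divr_ge0 ?fk_ge0 // ltW.
have key H : packs_in_height L H -> Wgt k (gfun p s pi) L <= T * H.
  move=> hp.
  have H0 : 0 <= H.
    case: hp => pos [hin _]; case: L hL Lne hin => [//|b L'] hL _ hin.
    have /= [_ _ /andP[z0 zH]] := hin 0%N erefl.
    have [_ _ /andP[h0 _]] := hL b (mem_head _ _).
    by apply: le_trans zH; rewrite addr_ge0.
  have hp1 := @swap_pack R _ _ hp.
  have nn1 : forall b, b \in map (swapb R) L -> 0 <= bl b.
    move=> b /mapP[b' /hL [_ /andP[w0 _] _] ->]; exact: w0.
  have hp2 := @transform R _ _ _ hp1 nn1 (g0 R p s pi) (g_DFF R p s pi p1 srng hdf).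
  have hp3 := @swap_pack R _ _ hp2.
  have nn2 : forall b, b \in map (swapb R) [seq (gfun p s pi (bl b), bw b, bh b) | b <- map (swapb R) L] -> 0 <= bl b.
    move=> b /mapP[b1 /mapP[b2 /mapP[b' /hL [/andP[l0 _] _ _] ->] ->] ->]; exact: l0.
  have hp4 := @transform R _ _ _ hp3 nn2 uf0 uf_DFF.
  have eL : [seq (uf (bl b), bw b, bh b) | b <- map (swapb R) [seq (gfun p s pi (bl b), bw b, bh b) | b <- map (swapb R) L]]
     = [seq (uf (bl b), gfun p s pi (bw b), bh b) | b <- L].
    by rewrite -!map_comp; apply: eq_map => -[[l w] h].
  rewrite eL in hp4.
  have := @volume R _ _ hp4.
  rewrite big_map /= => hv.
  have {hv} hv : \sum_(b <- L) uf (bl b) * gfun p s pi (bw b) * bh b <= H.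
    apply: hv => // b /mapP[b' /hL [_ _ /andP[h0 _]] ->] /=.
    by split => //; [apply: uf_ge0 | apply: g_ge0].
  rewrite -ler_pdivrMl // mulrC /Wgt mulr_suml.
  apply: le_trans hv; rewrite le_eqVlt; apply/orP; left; apply/eqP.
  apply: eq_bigr => b _; rewrite /uf; move: (fk k (bl b)) (gfun p s pi (bw b)) (bh b) (T^-1) => a1 a2 a3 a4; ring.
rewrite /OPT -ler_pdivrMl //; apply: lb_le_inf.
  by exists (\sum_(b <- L) bh b); apply: stack_pack.
by move=> H /= hH; rewrite ler_pdivrMl //; apply: key.
Qed.
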